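(* Let $G=C\ltimes Q$, where $C$ is an elementary abelian $2$-group and $Q$ is a finite abelian group of odd exponent $n'$. Then $$\{g^{2n'/d}\mid g\in G\}=\{g\in G\mid g^d=1\}$$ for every divisor $d$ of $2n'$ such that either $d=2$, or $d\mid n'$ and $\gcd(d,n'/d)=1$. *)

(* Defs.v *)
From mathcomp Require Import all_boot all_fingroup all_solvable.
Set Implicit Arguments. Unset Strict Implicit. Unset Printing Implicit Defensive.

(* Main.v *)
Require Import Defs.
From mathcomp Require Import all_boot all_fingroup all_solvable.
Local Open Scope group_scope.

Lemma coprime_root (gT : finGroupType) (x : gT) (k : nat) :
  coprime #[x] k -> exists y, y \in <[x]> /\ x = y ^+ k.
Proof.
move=> cxk.
exists (x ^+ expg_invn <[x]> k); split; first by rewrite mem_cycle.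
have := @expgK _ <[x]>%G k cxk x (cycle_id x).
by rewrite /= expgAC.
Qed.

Theorem mainTheorem10 (gT : finGroupType) (G C Q : {group gT}) (n d : nat) :
  Q ><| C = G ->
  2.-abelem C ->
  abelian Q -> exponent Q = n -> odd n ->
  (d %| 2 * n)%N ->
  (d == 2) || ((d %| n)%N && coprime d (n %/ d)) ->
  [set g ^+ (2 * n %/ d) | g in G] = [set g in G | g ^+ d == 1].
Proof.
move=> sdG abC _ expQ oddn dvd hd.
have [nQG sCG QCG nQC _] := sdprod_context sdG.
have [_ C2] := abelemP (isT : prime 2) abC.
have sq : forall g, g \in G -> g ^+ 2 \in Q.
  move=> g; rewrite -QCG => /imset2P [q c qQ cC ->].
  have cc : c ^+ 2 = 1 := C2 c cC.
  have ci : c^-1 = c.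
    by rewrite -[LHS]mulg1 -cc expgS expg1 mulKg.
  have -> : (q * c) ^+ 2 = q * q ^ c.
    by rewrite expgS expg1 /conjg ci !mulgA.
  rewrite groupM // memJ_norm //; exact: (subsetP nQC).
set m := 2 * n %/ d.
have md : (m * d = 2 * n)%N by rewrite divnK.
have cdm : coprime d m.
  case/orP: hd => [/eqP d2 | /andP [dn cd]].
    by rewrite /m d2 mulKn // coprime2n.
  rewrite /m -muln_divA // coprimeMr cd andbT coprimen2.
  exact: dvdn_odd dn oddn.
apply/setP => x; rewrite inE; apply/imsetP/andP.
  case=> g gG ->; apply: conj; first by rewrite groupX.
  by rewrite -expgM md expgM -expQ (expg_exponent (sq g gG)).
case=> xG xd.
have cxm : coprime #[x] m.
  apply: coprime_dvdl cdm; by rewrite order_dvdn.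
have [y [/cycleP [i ->] ->]] := coprime_root _ _ _ cxm.
by exists (x ^+ i); rewrite ?groupX.
Qed.
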